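(* There exists a chain $\mathcal{J}\subset\mathcal{L}$ (totally ordered by inclusion) with $|\mathcal{J}|=\mathfrak{c}$ such that all spaces $(\mathbb{R},\tau)$ with $\tau\in\mathcal{J}$ are completely metrizable and pairwise homeomorphic.
   Context: $\mathfrak{c}=|\mathbb{R}|$. $\eta$ denotes the Euclidean topology on $\mathbb{R}$. $\mathcal{L}$ denotes the family of all Hausdorff topologies $\tau$ on $\mathbb{R}$ with $\tau\subset\eta$. *)

(* Defs.v *)
From Stdlib Require Export Reals.
Open Scope R_scope.

Definition rset := R -> Prop.
Definition rtop := rset -> Prop.

Definition is_topology (tau : rtop) : Prop :=
  tau (fun _ => True) /\ tau (fun _ => False) /\
  (forall U V, tau U -> tau V -> tau (fun x => U x /\ V x)) /\
  (forall F : rset -> Prop, (forall U, F U -> tau U) ->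
     tau (fun x => exists U, F U /\ U x)).

Definition hausdorff (tau : rtop) : Prop :=
  forall x y : R, x <> y -> exists U V, tau U /\ tau V /\ U x /\ V y /\
    (forall z, ~ (U z /\ V z)).

Definition eta : rtop := fun U =>
  forall x, U x -> exists e, 0 < e /\ forall y, Rabs (y - x) < e -> U y.

Definition top_sub (tau sigma : rtop) : Prop := forall U, tau U -> sigma U.

Definition in_L (tau : rtop) : Prop :=
  is_topology tau /\ hausdorff tau /\ top_sub tau eta.

Definition is_metric (d : R -> R -> R) : Prop :=
  (forall x y, d x y = 0 <-> x = y) /\
  (forall x y, d x y = d y x) /\
  (forall x y z, d x z <= d x y + d y z).

Definition metric_open (d : R -> R -> R) : rtop := fun U =>
  forall x, U x -> exists e, 0 < e /\ forall y, d x y < e -> U y.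

Definition metric_complete (d : R -> R -> R) : Prop :=
  forall u : nat -> R,
    (forall e, 0 < e -> exists N, forall m n, (N <= m)%nat -> (N <= n)%nat ->
        d (u m) (u n) < e) ->
    exists l, forall e, 0 < e -> exists N, forall n, (N <= n)%nat -> d (u n) l < e.

Definition completely_metrizable (tau : rtop) : Prop :=
  exists d, is_metric d /\ metric_complete d /\
    (forall U, tau U <-> metric_open d U).

Definition homeomorphic (tau1 tau2 : rtop) : Prop :=
  exists f g : R -> R,
    (forall x, g (f x) = x) /\ (forall y, f (g y) = y) /\
    (forall U, tau2 U -> tau1 (fun x => U (f x))) /\
    (forall U, tau1 U -> tau2 (fun y => U (g y))).

Definition same_top (tau sigma : rtop) : Prop := forall U, tau U <-> sigma U.

(* Main.v *)
Require Import Defs.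
From Stdlib Require Import Reals Lra Lia Classical.
Open Scope R_scope.

Lemma Rmin_cases a b : Rmin a b = a \/ Rmin a b = b.
Proof. unfold Rmin; destruct (Rle_dec a b); auto. Qed.

Lemma Rmin_glb a b c : c <= a -> c <= b -> c <= Rmin a b.
Proof. intros; destruct (Rmin_cases a b) as [E|E]; rewrite E; auto. Qed.

Lemma Rabs_le_between a b : Rabs a <= b -> -b <= a <= b.
Proof. unfold Rabs; destruct (Rcase_abs a); lra. Qed.

Lemma Rabs_lt_between a b : Rabs a < b -> -b < a < b.
Proof. unfold Rabs; destruct (Rcase_abs a); lra. Qed.

Lemma Rabs_lt_intro a b : -b < a < b -> Rabs a < b.
Proof. unfold Rabs; destruct (Rcase_abs a); lra. Qed.

Lemma Rmin_lip a1 b1 a2 b2 c :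
  Rabs (a1 - a2) <= c -> Rabs (b1 - b2) <= c -> Rabs (Rmin a1 b1 - Rmin a2 b2) <= c.
Proof.
  intros H1 H2. apply Rabs_le. apply Rabs_le_between in H1. apply Rabs_le_between in H2.
  pose proof (Rmin_l a1 b1); pose proof (Rmin_r a1 b1);
  pose proof (Rmin_l a2 b2); pose proof (Rmin_r a2 b2).
  destruct (Rmin_cases a1 b1) as [E1|E1]; destruct (Rmin_cases a2 b2) as [E2|E2];
  rewrite ?E1, ?E2 in *; lra.
Qed.

Lemma Rmin_scale a b a' b' c : 0 <= c -> a <= c * a' -> b <= c * b' ->
  Rmin a b <= c * Rmin a' b'.
Proof.
  intros. destruct (Rmin_cases a' b') as [E|E]; rewrite E.
  - pose proof (Rmin_l a b); lra.
  - pose proof (Rmin_r a b); lra.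
Qed.

Lemma Int_part_shift (k : Z) t : 0 <= t < 1 -> Int_part (IZR k + t) = k.
Proof.
  intros Ht. unfold Int_part.
  assert (E: (k + 1)%Z = up (IZR k + t)).
  { apply tech_up; rewrite plus_IZR; simpl; lra. }
  lia.
Qed.

Lemma frac_shift (k : Z) t : 0 <= t < 1 -> frac_part (IZR k + t) = t.
Proof. intros Ht; unfold frac_part; rewrite Int_part_shift; auto; lra. Qed.

Lemma fp_bounds x : 0 <= frac_part x < 1.
Proof. destruct (base_fp x); lra. Qed.

Lemma fp_decomp x : x = IZR (Int_part x) + frac_part x.
Proof. unfold frac_part; ring. Qed.

Lemma Int_part_le x y : x <= y -> (Int_part x <= Int_part y)%Z.
Proof.
  intros H. destruct (base_Int_part x); destruct (base_Int_part y).
  assert (IZR (Int_part x) < IZR (Int_part y) + 1) by lra.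
  rewrite <- plus_IZR in H4. apply lt_IZR in H4. lia.
Qed.

Lemma Int_part_lt_gap x y : (Int_part x < Int_part y)%Z ->
  IZR (Int_part x) + 1 <= IZR (Int_part y).
Proof.
  intros H. rewrite <- (plus_IZR _ 1). apply IZR_le. lia.
Qed.

Definition Dl (th f : R) : R := if Rle_dec f th then 0 else Rmin (f - th) (1 - f).
Definition DD th x := Dl th (frac_part x).
Definition ww (x : R) := / (1 + Rabs x).
Definition rho th x := Rmin (Rabs x) ((DD th x + ww x) / 2).
Definition dd th x y := Rmin (Rabs (x - y)) (rho th x + rho th y).

Section S.
Variable th : R.
Hypothesis Hth : 0 < th < 1.

Lemma Dl_nonneg f : 0 <= f <= 1 -> 0 <= Dl th f.
Proof. intros; unfold Dl; destruct (Rle_dec f th); [lra|]. apply Rmin_glb; lra. Qed.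

Lemma Dl_le_f f : 0 <= f <= 1 -> Dl th f <= f.
Proof. intros; unfold Dl; destruct (Rle_dec f th); [lra|]. pose proof (Rmin_l (f-th) (1-f)); lra. Qed.

Lemma Dl_le_1f f : 0 <= f <= 1 -> Dl th f <= 1 - f.
Proof. intros; unfold Dl; destruct (Rle_dec f th); [lra|]. pose proof (Rmin_r (f-th) (1-f)); lra. Qed.

Lemma Dl_lip u v : 0 <= u <= 1 -> 0 <= v <= 1 -> Rabs (Dl th u - Dl th v) <= Rabs (u - v).
Proof.
  intros Hu Hv. unfold Dl.
  destruct (Rle_dec u th); destruct (Rle_dec v th).
  - rewrite Rminus_0_r, Rabs_R0; apply Rabs_pos.
  - rewrite Rminus_0_l, Rabs_Ropp.
    rewrite Rabs_pos_eq by (apply Rmin_glb; lra).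
    pose proof (Rmin_l (v-th) (1-v)). unfold Rabs at 1; destruct (Rcase_abs (u - v)); lra.
  - rewrite Rminus_0_r.
    rewrite Rabs_pos_eq by (apply Rmin_glb; lra).
    pose proof (Rmin_l (u-th) (1-u)). unfold Rabs; destruct (Rcase_abs (u - v)); lra.
  - apply Rmin_lip.
    + replace (u - th - (v - th)) with (u - v) by ring; lra.
    + replace (1 - u - (1 - v)) with (-(u - v)) by ring. rewrite Rabs_Ropp; lra.
Qed.

Lemma DD_nonneg x : 0 <= DD th x.
Proof. unfold DD; pose proof (fp_bounds x); apply Dl_nonneg; lra. Qed.

Lemma DD_lip0 x y : x <= y -> Rabs (DD th x - DD th y) <= Rabs (x - y).
Proof.
  intros Hxy. unfold DD.
  pose proof (fp_decomp x); pose proof (fp_decomp y);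
  pose proof (fp_bounds x); pose proof (fp_bounds y).
  pose proof (Int_part_le x y Hxy) as Hk.
  destruct (Z.eq_dec (Int_part x) (Int_part y)) as [E|E].
  - eapply Rle_trans. apply Dl_lip; lra.
    apply Req_le; f_equal. unfold frac_part; rewrite E; ring.
  - assert (G := Int_part_lt_gap x y ltac:(lia)).
    pose proof (Dl_nonneg (frac_part x) ltac:(lra)).
    pose proof (Dl_nonneg (frac_part y) ltac:(lra)).
    pose proof (Dl_le_f (frac_part y) ltac:(lra)).
    pose proof (Dl_le_1f (frac_part x) ltac:(lra)).
    replace (Rabs (x - y)) with (y - x)
      by (rewrite Rabs_minus_sym; symmetry; apply Rabs_pos_eq; lra).
    apply Rabs_le; lra.
Qed.

Lemma DD_lip x y : Rabs (DD th x - DD th y) <= Rabs (x - y).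
Proof.
  destruct (Rle_dec x y). apply DD_lip0; auto.
  rewrite (Rabs_minus_sym (DD th x)), (Rabs_minus_sym x). apply DD_lip0; lra.
Qed.

Lemma ww_pos x : 0 < ww x.
Proof. unfold ww; apply Rinv_0_lt_compat; pose proof (Rabs_pos x); lra. Qed.

Lemma inv_lip a b : 1 <= a -> 1 <= b -> Rabs (/a - /b) <= Rabs (a - b).
Proof.
  intros. replace (/a - /b) with ((b - a) * (/a * /b)) by (field; lra).
  rewrite Rabs_mult, Rabs_minus_sym.
  assert (0 < /a * /b <= 1).
  { split. apply Rmult_lt_0_compat; apply Rinv_0_lt_compat; lra.
    rewrite <- (Rmult_1_l 1). apply Rmult_le_compat; try (left; apply Rinv_0_lt_compat; lra);
    rewrite <- Rinv_1; apply Rinv_le_contravar; lra. }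
  rewrite (Rabs_pos_eq (/a * /b)) by lra.
  pose proof (Rabs_pos (a - b)). nra.
Qed.

Lemma ww_lip x y : Rabs (ww x - ww y) <= Rabs (x - y).
Proof.
  unfold ww. eapply Rle_trans. apply inv_lip; pose proof (Rabs_pos x); pose proof (Rabs_pos y); lra.
  replace (1 + Rabs x - (1 + Rabs y)) with (Rabs x - Rabs y) by ring.
  apply Rabs_triang_inv2.
Qed.

Lemma rho_nonneg x : 0 <= rho th x.
Proof.
  unfold rho. apply Rmin_glb. apply Rabs_pos.
  pose proof (DD_nonneg x); pose proof (ww_pos x); lra.
Qed.

Lemma rho_le_abs x : rho th x <= Rabs x.
Proof. apply Rmin_l. Qed.

Lemma rho_zero x : rho th x = 0 -> x = 0.
Proof.
  unfold rho; intros H. destruct (Rmin_cases (Rabs x) ((DD th x + ww x) / 2)) as [E|E];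
  rewrite E in H.
  - destruct (Req_dec x 0); auto. pose proof (Rabs_pos_lt x H0); lra.
  - pose proof (DD_nonneg x); pose proof (ww_pos x); lra.
Qed.

Lemma rho_lip x y : Rabs (rho th x - rho th y) <= Rabs (x - y).
Proof.
  unfold rho. apply Rmin_lip. apply Rabs_triang_inv2.
  pose proof (DD_lip x y); pose proof (ww_lip x y).
  replace ((DD th x + ww x) / 2 - (DD th y + ww y) / 2)
    with ((DD th x - DD th y) / 2 + (ww x - ww y) / 2) by field.
  eapply Rle_trans. apply Rabs_triang.
  unfold Rdiv; rewrite !Rabs_mult, (Rabs_pos_eq (/2)) by lra. lra.
Qed.

Lemma dd_le_abs x y : dd th x y <= Rabs (x - y).
Proof. apply Rmin_l. Qed.

Lemma dd_le_rho x y : dd th x y <= rho th x + rho th y.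
Proof. apply Rmin_r. Qed.

Lemma dd_nonneg x y : 0 <= dd th x y.
Proof. unfold dd; apply Rmin_glb. apply Rabs_pos. pose proof (rho_nonneg x); pose proof (rho_nonneg y); lra. Qed.

Lemma dd_metric : is_metric (dd th).
Proof.
  split; [|split].
  - intros x y; split.
    + unfold dd; intros H. destruct (Rmin_cases (Rabs (x - y)) (rho th x + rho th y)) as [E|E];
      rewrite E in H.
      * destruct (Req_dec (x - y) 0); [lra|]. pose proof (Rabs_pos_lt _ H0); lra.
      * pose proof (rho_nonneg x); pose proof (rho_nonneg y).
        rewrite (rho_zero x), (rho_zero y); lra.
    + intros ->. apply Rle_antisym; [|apply dd_nonneg]. eapply Rle_trans. apply dd_le_abs.
      rewrite Rminus_diag, Rabs_R0; lra.
  - intros x y; unfold dd; rewrite Rabs_minus_sym, Rplus_comm; reflexivity.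
  - intros x y z.
    pose proof (rho_lip x y); pose proof (rho_lip y z).
    apply Rabs_le_between in H; apply Rabs_le_between in H0.
    pose proof (Rabs_triang (x - y) (y - z)). replace (x - y + (y - z)) with (x - z) in H1 by ring.
    pose proof (rho_nonneg x); pose proof (rho_nonneg y); pose proof (rho_nonneg z).
    pose proof (dd_le_abs x z); pose proof (dd_le_rho x z).
    unfold dd at 2 3.
    destruct (Rmin_cases (Rabs (x - y)) (rho th x + rho th y)) as [E|E]; rewrite E;
    destruct (Rmin_cases (Rabs (y - z)) (rho th y + rho th z)) as [E'|E']; rewrite E';
    rewrite ?(Rabs_minus_sym y z) in *; rewrite ?(Rabs_minus_sym x y) in *; lra.
Qed.

End S.

Section M.
Variable d : R -> R -> R.
Hypothesis Hd : is_metric d.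

Lemma d_nonneg x y : 0 <= d x y.
Proof.
  destruct Hd as [H0 [Hs Ht]]. pose proof (Ht x y x). rewrite (Hs y x) in H.
  assert (d x x = 0) by (apply H0; auto). lra.
Qed.

Lemma ball_open x r : metric_open d (fun y => d x y < r).
Proof.
  destruct Hd as [H0 [Hs Ht]].
  intros z Hz. exists (r - d x z); split; [lra|].
  intros y Hy. pose proof (Ht x z y). lra.
Qed.

Lemma mo_topology : is_topology (metric_open d).
Proof.
  split; [|split; [|split]].
  - intros x _. exists 1; split; [lra|auto].
  - intros x [].
  - intros U V HU HV x [Ux Vx].
    destruct (HU x Ux) as [e1 [He1 H1]]. destruct (HV x Vx) as [e2 [He2 H2]].
    exists (Rmin e1 e2); split. apply Rmin_glb_lt; lra.
    intros y Hy. pose proof (Rmin_l e1 e2); pose proof (Rmin_r e1 e2).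
    split; [apply H1|apply H2]; lra.
  - intros F HF x [U [FU Ux]].
    destruct (HF U FU x Ux) as [e [He H]]. exists e; split; auto.
    intros y Hy. exists U; split; auto.
Qed.

Lemma mo_hausdorff : hausdorff (metric_open d).
Proof.
  pose proof Hd as [H0 [Hs Ht]].
  intros x y Hxy.
  assert (Hp : 0 < d x y).
  { destruct (d_nonneg x y) as [h|h]; auto. exfalso; apply Hxy, H0; auto. }
  exists (fun z => d x z < d x y / 2), (fun z => d y z < d x y / 2).
  split; [apply ball_open|]. split; [apply ball_open|].
  split. { assert (d x x = 0) by (apply H0; auto). lra. }
  split. { assert (d y y = 0) by (apply H0; auto). lra. }
  intros z [h1 h2]. pose proof (Ht x z y). rewrite (Hs z y) in H. lra.
Qed.

Lemma mo_sub_eta : (forall x y, d x y <= Rabs (x - y)) -> top_sub (metric_open d) eta.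
Proof.
  intros Hle U HU x Ux. destruct (HU x Ux) as [e [He H]]. exists e; split; auto.
  intros y Hy. apply H. pose proof (Hle x y). rewrite Rabs_minus_sym in Hy. lra.
Qed.

Lemma mo_transfer (d2 : R -> R -> R) (f : R -> R) (L : R) :
  0 < L -> (forall x y, d2 (f x) (f y) <= L * d x y) ->
  forall U, metric_open d2 U -> metric_open d (fun x => U (f x)).
Proof.
  intros HL Hlip U HU x Ux. destruct (HU (f x) Ux) as [e [He H]].
  exists (e / L); split. apply Rdiv_lt_0_compat; lra.
  intros y Hy. apply H. pose proof (Hlip x y).
  assert (L * d x y < L * (e / L)) by (apply Rmult_lt_compat_l; lra).
  replace (L * (e / L)) with e in H1 by (field; lra). lra.
Qed.

End M.

Lemma dd_complete th : 0 < th < 1 -> metric_complete (dd th).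
Proof.
  intros Hth u Hc.
  pose proof (dd_metric th Hth) as Hm. destruct Hm as [H0 [Hs Ht]].
  destruct (classic (exists e0, 0 < e0 /\ exists N0, forall n, (N0 <= n)%nat -> e0 <= rho th (u n)))
    as [[e0 [He0 [N0 HN0]]] | Hno].
  - assert (Cauchy_crit u).
    { intros eps Heps.
      destruct (Hc (Rmin eps e0) ltac:(apply Rmin_glb_lt; lra)) as [N HN].
      exists (max N N0). intros n m Hn Hm. unfold Rdist.
      pose proof (HN n m ltac:(lia) ltac:(lia)).
      pose proof (HN0 n ltac:(lia)). pose proof (rho_nonneg th (u m)).
      pose proof (Rmin_l eps e0); pose proof (Rmin_r eps e0).
      unfold dd in H.
      destruct (Rmin_cases (Rabs (u n - u m)) (rho th (u n) + rho th (u m))) as [E|E];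
      rewrite E in H; lra. }
    destruct (R_complete u H) as [l Hl]. exists l. intros e He.
    destruct (Hl e He) as [N HN]. exists N. intros n Hn.
    pose proof (HN n Hn). unfold Rdist in H1. pose proof (dd_le_abs th (u n) l). lra.
  - exists 0. intros e He.
    destruct (Hc (e/2) ltac:(lra)) as [N HN]. exists N.
    assert (exists n0, (N <= n0)%nat /\ rho th (u n0) < e / 2) as [n0 [Hn0 Hr]].
    { apply NNPP; intros Hnn. apply Hno. exists (e/2); split; [lra|]. exists N.
      intros n Hn. apply Rnot_lt_le. intros Hlt. apply Hnn. exists n; auto. }
    intros n Hn. pose proof (HN n n0 Hn Hn0). pose proof (Ht (u n) (u n0) 0).
    pose proof (dd_le_rho th (u n0) 0).
    assert (rho th 0 = 0).
    { pose proof (rho_le_abs th 0); pose proof (rho_nonneg th 0). rewrite Rabs_R0 in H3; lra. }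
    lra.
Qed.

Definition Phi (t t' f : R) : R :=
  if Rle_dec f t then f * (t' / t) else t' + (f - t) * ((1 - t') / (1 - t)).
Definition hm t t' x := IZR (Int_part x) + Phi t t' (frac_part x).
Definition LL t t' := 2 + t' / t + (1 - t') / (1 - t).

Section H.
Variables t t' : R.
Hypothesis Ht : 0 < t < 1.
Hypothesis Ht' : 0 < t' < 1.

Let s1 := t' / t.
Let s2 := (1 - t') / (1 - t).
Lemma s1e : s1 * t = t'. Proof. unfold s1; field; lra. Qed.
Lemma s2e : s2 * (1 - t) = 1 - t'. Proof. unfold s2; field; lra. Qed.
Lemma s1p : 0 < s1. Proof. unfold s1; apply Rdiv_lt_0_compat; lra. Qed.
Lemma s2p : 0 < s2. Proof. unfold s2; apply Rdiv_lt_0_compat; lra. Qed.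

Lemma Phi_range f : 0 <= f < 1 -> 0 <= Phi t t' f < 1.
Proof.
  pose proof s1e; pose proof s2e; pose proof s1p; pose proof s2p.
  intros Hf; unfold Phi; fold s1 s2; destruct (Rle_dec f t); nra.
Qed.

Lemma Phi_mono u v L : L >= 2 + s1 + s2 -> 0 <= u <= v -> v <= 1 ->
  0 <= Phi t t' v - Phi t t' u <= L * (v - u).
Proof.
  pose proof s1e; pose proof s2e; pose proof s1p; pose proof s2p.
  intros HL Huv Hv; unfold Phi; fold s1 s2;
  destruct (Rle_dec u t); destruct (Rle_dec v t); nra.
Qed.

Lemma Phi_0 : Phi t t' 0 = 0.
Proof. unfold Phi; destruct (Rle_dec 0 t); [ring|lra]. Qed.

Lemma Phi_1 : Phi t t' 1 = 1.
Proof. pose proof s2e. unfold Phi; fold s1 s2; destruct (Rle_dec 1 t); lra. Qed.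

Lemma Phi_D f : 0 <= f < 1 -> Dl t' (Phi t t' f) <= s2 * Dl t f.
Proof.
  pose proof s1e; pose proof s2e; pose proof s1p; pose proof s2p.
  intros Hf. unfold Phi; fold s1 s2. unfold Dl.
  destruct (Rle_dec f t).
  - destruct (Rle_dec (f * s1) t'); [lra|]. exfalso; nra.
  - destruct (Rle_dec (t' + (f - t) * s2) t'); [exfalso; nra|].
    destruct (Rle_dec f t); [lra|].
    replace (t' + (f - t) * s2 - t') with (s2 * (f - t)) by ring.
    replace (1 - (t' + (f - t) * s2)) with (s2 * (1 - f)) by nra.
    destruct (Rmin_cases (f - t) (1 - f)) as [E|E]; rewrite E.
    + apply Rmin_l.
    + apply Rmin_r.
Qed.

Lemma Phi_inv f : 0 <= f < 1 -> Phi t' t (Phi t t' f) = f.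
Proof.
  pose proof s1e; pose proof s2e; pose proof s1p; pose proof s2p.
  intros Hf. unfold Phi at 2; fold s1 s2. unfold Phi.
  destruct (Rle_dec f t).
  - destruct (Rle_dec (f * s1) t'); [|exfalso; nra].
    unfold s1; field; lra.
  - destruct (Rle_dec (t' + (f - t) * s2) t'); [exfalso; nra|].
    unfold s2; field; lra.
Qed.

Lemma hm_mono x y : x <= y -> 0 <= hm t t' y - hm t t' x <= LL t t' * (y - x).
Proof.
  intros Hxy. unfold hm. pose proof s1p; pose proof s2p.
  assert (HL : LL t t' >= 2 + s1 + s2) by (unfold LL, s1, s2; lra).
  pose proof (fp_decomp x); pose proof (fp_decomp y);
  pose proof (fp_bounds x); pose proof (fp_bounds y).
  pose proof (Int_part_le x y Hxy) as Hk.
  destruct (Z.eq_dec (Int_part x) (Int_part y)) as [E|E].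
  - rewrite E. pose proof (Phi_mono (frac_part x) (frac_part y) (LL t t') HL) as PM.
    assert (frac_part x <= frac_part y) by (unfold frac_part; rewrite E; lra).
    replace (y - x) with (frac_part y - frac_part x) by (unfold frac_part; rewrite E; ring).
    specialize (PM ltac:(lra) ltac:(lra)). lra.
  - assert (G := Int_part_lt_gap x y ltac:(lia)).
    pose proof (Phi_mono 0 (frac_part y) (LL t t') HL ltac:(lra) ltac:(lra)) as P1.
    pose proof (Phi_mono (frac_part x) 1 (LL t t') HL ltac:(lra) ltac:(lra)) as P2.
    rewrite Phi_0 in P1. rewrite Phi_1 in P2.
    assert (LL t t' * (y - x) = LL t t' * (frac_part y - 0) + LL t t' * (1 - frac_part x)
       + LL t t' * (IZR (Int_part y) - IZR (Int_part x) - 1)).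
    { assert (Ey : y - x = (frac_part y - 0) + (1 - frac_part x)
        + (IZR (Int_part y) - IZR (Int_part x) - 1)) by lra. rewrite Ey; ring. }
    assert (0 <= LL t t' * (IZR (Int_part y) - IZR (Int_part x) - 1)) by
      (apply Rmult_le_pos; lra).
    assert ((IZR (Int_part y) - IZR (Int_part x) - 1) <=
            LL t t' * (IZR (Int_part y) - IZR (Int_part x) - 1)).
    { pose proof s1p; pose proof s2p.
      rewrite <- (Rmult_1_l (IZR (Int_part y) - IZR (Int_part x) - 1)) at 1.
      apply Rmult_le_compat_r; lra. }
    lra.
Qed.

Lemma hm_lip x y : Rabs (hm t t' x - hm t t' y) <= LL t t' * Rabs (x - y).
Proof.
  destruct (Rle_dec x y).
  - pose proof (hm_mono x y r). rewrite Rabs_minus_sym, (Rabs_minus_sym x).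
    rewrite !Rabs_pos_eq by lra. lra.
  - pose proof (hm_mono y x ltac:(lra)). rewrite !Rabs_pos_eq by lra. lra.
Qed.

Lemma hm_parts x : Int_part (hm t t' x) = Int_part x /\ frac_part (hm t t' x) = Phi t t' (frac_part x).
Proof.
  pose proof (Phi_range (frac_part x) (fp_bounds x)).
  unfold hm; split; [apply Int_part_shift|apply frac_shift]; auto.
Qed.

Lemma hm_inv x : hm t' t (hm t t' x) = x.
Proof.
  destruct (hm_parts x) as [E1 E2]. unfold hm at 1. rewrite E1, E2, Phi_inv by apply fp_bounds.
  symmetry; apply fp_decomp.
Qed.

Lemma hm_0 : hm t t' 0 = 0.
Proof.
  assert (E : 0 = IZR 0 + 0) by (simpl; ring).
  unfold hm. rewrite E, Int_part_shift, frac_shift, Phi_0 by lra. simpl; ring.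
Qed.

Lemma hm_close x : Rabs (hm t t' x - x) <= 1.
Proof.
  pose proof (Phi_range (frac_part x) (fp_bounds x)). pose proof (fp_bounds x).
  pose proof (fp_decomp x). unfold hm. apply Rabs_le. lra.
Qed.

Lemma ww_h x : ww (hm t t' x) <= 2 * ww x.
Proof.
  pose proof (hm_close x). apply Rabs_le_between in H.
  unfold ww. set (a := 1 + Rabs x). set (b := 1 + Rabs (hm t t' x)).
  assert (Hb: 1 <= b) by (unfold b; pose proof (Rabs_pos (hm t t' x)); lra).
  assert (Ha: 1 <= a) by (unfold a; pose proof (Rabs_pos x); lra).
  assert (a <= 2 * b).
  { unfold a, b. pose proof (Rabs_triang (hm t t' x) (x - hm t t' x)).
    replace (hm t t' x + (x - hm t t' x)) with x in H0 by ring.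
    assert (Rabs (x - hm t t' x) <= 1) by (apply Rabs_le; lra).
    pose proof (Rabs_pos (hm t t' x)). lra. }
  replace (2 * / a) with (/ (a / 2)) by (field; lra).
  apply Rinv_le_contravar; lra.
Qed.

Lemma rho_h x : rho t' (hm t t' x) <= LL t t' * rho t x.
Proof.
  assert (HL : LL t t' >= 2 + s1 + s2) by (unfold LL, s1, s2; lra).
  pose proof s2p; pose proof s1p.
  unfold rho. apply Rmin_scale. lra.
  - pose proof (hm_lip x 0). rewrite hm_0, !Rminus_0_r in H1. auto.
  - pose proof (ww_h x). pose proof (ww_pos x).
    assert (DD t' (hm t t' x) <= s2 * DD t x).
    { unfold DD. destruct (hm_parts x) as [_ E]. rewrite E. apply Phi_D, fp_bounds. }
    pose proof (DD_nonneg t x). nra.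
Qed.

Lemma dd_h x y : dd t' (hm t t' x) (hm t t' y) <= LL t t' * dd t x y.
Proof.
  unfold dd at 2. assert (HL : LL t t' >= 2 + s1 + s2) by (unfold LL, s1, s2; lra).
  pose proof s2p; pose proof s1p.
  unfold dd. apply Rmin_scale. lra. apply hm_lip.
  pose proof (rho_h x); pose proof (rho_h y). lra.
Qed.

End H.

Lemma Dl_anti t1 t2 f : t1 <= t2 -> 0 <= f <= 1 -> Dl t2 f <= Dl t1 f.
Proof.
  intros H Hf. unfold Dl. destruct (Rle_dec f t2); destruct (Rle_dec f t1).
  - lra.
  - apply Rmin_glb; lra.
  - lra.
  - destruct (Rmin_cases (f - t1) (1 - f)) as [E|E]; rewrite E.
    + pose proof (Rmin_l (f - t2) (1 - f)); lra.
    + apply Rmin_r.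
Qed.

Lemma dd_anti t1 t2 x y : t1 <= t2 -> dd t2 x y <= 1 * dd t1 x y.
Proof.
  intros H. rewrite Rmult_1_l.
  assert (Hr : forall z, rho t2 z <= rho t1 z).
  { intros z. unfold rho. rewrite <- (Rmult_1_l (Rmin (Rabs z) ((DD t1 z + ww z)/2))).
    apply Rmin_scale; [lra|lra|].
    assert (DD t2 z <= DD t1 z) by (unfold DD; apply Dl_anti; pose proof (fp_bounds z); lra).
    lra. }
  unfold dd. rewrite <- (Rmult_1_l (Rmin (Rabs (x - y)) (rho t1 x + rho t1 y))).
  apply Rmin_scale; [lra|lra|]. pose proof (Hr x); pose proof (Hr y); lra.
Qed.

Lemma rho_0 t : rho t 0 = 0.
Proof.
  pose proof (rho_le_abs t 0); pose proof (rho_nonneg t 0). rewrite Rabs_R0 in H; lra.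
Qed.

Lemma nonopen t t' : 0 < t -> t < t' -> t' < 1 ->
  ~ metric_open (dd t') (fun y => dd t 0 y < (t' - t) / 4).
Proof.
  intros H1 H2 H3 Hop.
  assert (Hd0 : dd t 0 0 < (t' - t) / 4).
  { pose proof (dd_le_rho t 0 0). rewrite rho_0 in H. pose proof (dd_nonneg t 0 0). lra. }
  destruct (Hop 0 Hd0) as [e [He Hb]].
  set (m := (t + t') / 2).
  set (y := IZR (up (1 + / e)) + m).
  assert (Hy : y > 1 + / e).
  { unfold y, m. destruct (archimed (1 + / e)). lra. }
  assert (Hie : 0 < / e) by (apply Rinv_0_lt_compat; lra).
  assert (Hfr : frac_part y = m) by (unfold y; apply frac_shift; unfold m; lra).
  assert (Hay : Rabs y = y) by (apply Rabs_pos_eq; lra).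
  assert (Hw : ww y < e).
  { unfold ww. rewrite Hay. rewrite <- (Rinv_inv e).
    apply Rinv_lt_contravar. apply Rmult_lt_0_compat; lra. lra. }
  assert (Hdt' : DD t' y = 0).
  { unfold DD, Dl. rewrite Hfr. destruct (Rle_dec m t'); [auto|unfold m in n; lra]. }
  assert (Hdt : (t' - t) / 2 <= DD t y).
  { unfold DD, Dl. rewrite Hfr. destruct (Rle_dec m t); [unfold m in r; lra|].
    apply Rmin_glb; unfold m; lra. }
  specialize (Hb y).
  assert (dd t' 0 y < e).
  { pose proof (dd_le_rho t' 0 y). rewrite rho_0 in H.
    pose proof (Rmin_r (Rabs y) ((DD t' y + ww y) / 2)). fold (rho t' y) in H0. lra. }
  specialize (Hb H).
  unfold dd in Hb. rewrite rho_0, Rplus_0_l in Hb.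
  unfold rho in Hb. rewrite Rminus_0_l, Rabs_Ropp, Hay in Hb.
  assert (Rmin y (Rmin y ((DD t y + ww y) / 2)) >= (t' - t) / 4).
  { pose proof (ww_pos y). apply Rle_ge. apply Rmin_glb; [lra|]. apply Rmin_glb; lra. }
  lra.
Qed.

Definition th (a : R) := (atan a + PI / 2) / PI.

Lemma th_range a : 0 < th a < 1.
Proof.
  pose proof (atan_bound a). pose proof PI_RGT_0. unfold th. split.
  - apply Rdiv_lt_0_compat; lra.
  - apply (Rmult_lt_reg_r PI); [lra|]. unfold Rdiv. rewrite Rmult_assoc, Rinv_l by lra. lra.
Qed.

Lemma th_mono a b : a < b -> th a < th b.
Proof.
  intros H. pose proof (atan_increasing a b H). pose proof PI_RGT_0. unfold th, Rdiv.
  apply Rmult_lt_compat_r. apply Rinv_0_lt_compat; lra. lra.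
Qed.

Lemma th_le a b : a <= b -> th a <= th b.
Proof. intros [H|H]. left; apply th_mono; auto. subst; lra. Qed.

Theorem proposition7 :
  exists T : R -> rtop,
    (forall a b, same_top (T a) (T b) -> a = b) /\
    (forall a, in_L (T a)) /\
    (forall a b, top_sub (T a) (T b) \/ top_sub (T b) (T a)) /\
    (forall a, completely_metrizable (T a)) /\
    (forall a b, homeomorphic (T a) (T b)).
Proof.
  exists (fun a => metric_open (dd (th a))).
  split; [|split; [|split; [|split]]].
  - intros a b Hs. destruct (Rtotal_order a b) as [h|[h|h]]; auto; exfalso.
    + pose proof (th_mono a b h). pose proof (th_range a); pose proof (th_range b).
      apply (nonopen (th a) (th b)); try lra.
      apply (Hs _). apply ball_open. apply dd_metric; auto.
    + pose proof (th_mono b a h). pose proof (th_range a); pose proof (th_range b).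
      apply (nonopen (th b) (th a)); try lra.
      apply (Hs _). apply ball_open. apply dd_metric; auto.
  - intros a. pose proof (th_range a). split; [apply mo_topology|split].
    + apply mo_hausdorff, dd_metric; auto.
    + apply mo_sub_eta. apply dd_le_abs.
  - intros a b. destruct (Rle_dec a b).
    + right. intros U HU. apply (mo_transfer (dd (th a)) (dd (th b)) (fun x => x) 1); auto; [lra|].
      intros; apply dd_anti, th_le; auto.
    + left. intros U HU. apply (mo_transfer (dd (th b)) (dd (th a)) (fun x => x) 1); auto; [lra|].
      intros; apply dd_anti, th_le; lra.
  - intros a. pose proof (th_range a). exists (dd (th a)). split; [apply dd_metric; auto|].
    split; [apply dd_complete; auto|]. intros U; tauto.
  - intros a b. pose proof (th_range a) as Ha; pose proof (th_range b) as Hb.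
    exists (hm (th a) (th b)), (hm (th b) (th a)).
    split; [intros; apply hm_inv; auto|]. split; [intros; apply hm_inv; auto|].
    split.
    + intros U HU. apply (mo_transfer _ (dd (th b)) _ (LL (th a) (th b))); auto.
      * unfold LL. pose proof (Rdiv_lt_0_compat (th b) (th a) ltac:(lra) ltac:(lra)).
        pose proof (Rdiv_lt_0_compat (1 - th b) (1 - th a) ltac:(lra) ltac:(lra)). lra.
      * apply dd_h; auto.
    + intros U HU. apply (mo_transfer _ (dd (th a)) _ (LL (th b) (th a))); auto.
      * unfold LL. pose proof (Rdiv_lt_0_compat (th a) (th b) ltac:(lra) ltac:(lra)).
        pose proof (Rdiv_lt_0_compat (1 - th a) (1 - th b) ltac:(lra) ltac:(lra)). lra.
      * apply dd_h; auto.
Qed.
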